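(* Let $(R,\mathcal B)$ be a bornological $V$-algebra. The following are equivalent: (1) $\varrho(M)\le1$ for all $M\in\mathcal B$ that are $V$-submodules; (2) $\sum_{j\ge0}\pi^jM^{cj+d}$ is bounded for all bounded $M$ and all $c,d\in\mathbb N$; (3) $\sum_{j\ge0}\pi^jM^{j+1}$ is bounded for all bounded $M$; (4) every bounded subset of $R$ is contained in a bounded $V$-submodule $M$ with $\pi M^2\subseteq M$.
   Context: $V$ complete DVR with uniformizer $\pi$, $|\pi|=\epsilon\in(0,1)$. A (convex) bornology: bounded sets contain finite sets, closed under subsets, finite unions and generated $V$-submodules; a bornological algebra has bounded multiplication. Sums $\sum_j X_j$ denote the set of finite sums of elements of $\bigcup_jX_j$. For $r\ge1$ and a $V$-submodule $M$, $r^{-n}\star M^n:=\pi^{\lceil\log_\epsilon(r^{-n})\rceil}M^n$, and ''$\varrho(M)\le1$'' means that $\sum_{n\ge0}r^{-n}\star M^n$ is bounded for every $r>1$. *)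

(* Defs.v *)
From Stdlib Require Import Reals ZArith.

(* ceiling of a real number: ceil x = 1 - up(-x), since up y is the unique
   integer with y < up y <= y + 1. *)
Definition Zceil (x : Rdefinitions.R) : Z := (1 - up (- x))%Z.

Definition log_base (eps y : Rdefinitions.R) : Rdefinitions.R := (ln y / ln eps)%R.

(* exponent k(eps,r,n) = ceil(log_eps(r^{-n})), so that
   r^{-n} ⋆ M^n = pi^{k} M^n.  For 0<eps<1 and r>=1 it is >= 0. *)
Definition star_exp (eps r : Rdefinitions.R) (n : nat) : nat :=
  Z.to_nat (Zceil (log_base eps (/ (r ^ n)))%R).

From HB Require Import structures.
From mathcomp Require Import all_boot all_order all_algebra.
Set Implicit Arguments. Unset Strict Implicit. Unset Printing Implicit Defensive.
Import Order.TTheory GRing.Theory Num.Theory.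
Local Open Scope ring_scope.

Definition complete_DVR_unif (V : idomainType) (pi : V) : Prop :=
  [/\ pi != 0, pi \notin GRing.unit,
      (forall x : V, x != 0 ->
         exists (n : nat) (u : V), u \is a GRing.unit /\ x = u * pi ^+ n),
      (forall x : V, (forall n : nat, exists y, x = pi ^+ n * y) -> x = 0)
    & (forall a : nat -> V, exists x : V, forall n : nat,
         exists y, x - \sum_(i < n) a i * pi ^+ i = pi ^+ n * y)].

Section Born.
Variables (V : idomainType) (A : algType V).

Definition incl_set (S T : A -> Prop) : Prop := forall x, S x -> T x.

Inductive finsums (U : A -> Prop) : A -> Prop :=
| finsums0 : finsums U 0
| finsumsS x s : U x -> finsums U s -> finsums U (x + s).

Definition span (S : A -> Prop) : A -> Prop :=
  finsums (fun z => exists (a : V) (x : A), S x /\ z = a *: x).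

Definition is_submod (M : A -> Prop) : Prop :=
  [/\ M 0, (forall x y, M x -> M y -> M (x + y))
    & (forall (a : V) x, M x -> M (a *: x))].

Fixpoint setpow (M : A -> Prop) (n : nat) : A -> Prop :=
  match n with
  | 0 => fun z => z = 1
  | n'.+1 => fun z => exists x y, setpow M n' x /\ M y /\ z = x * y
  end.

Definition sscale (a : V) (X : A -> Prop) : A -> Prop :=
  fun z => exists x, X x /\ z = a *: x.

Definition setmul (S T : A -> Prop) : A -> Prop :=
  fun z => exists x y, S x /\ T y /\ z = x * y.

Definition bornological_algebra (B : (A -> Prop) -> Prop) : Prop :=
  [/\ (forall s : seq A, B (fun x => x \in s)),
      (forall S T, B T -> incl_set S T -> B S),
      (forall S T, B S -> B T -> B (fun x => S x \/ T x)),
      (forall S, B S -> B (span S))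
    & (forall S T, B S -> B T -> B (setmul S T))].

(* rho(M) <= 1 : sum_{n>=0} r^{-n} ⋆ M^n is bounded for every r > 1 *)
Definition rho_le1 (B : (A -> Prop) -> Prop) (pi : V) (eps : Rdefinitions.R)
  (M : A -> Prop) : Prop :=
  forall r : Rdefinitions.R, Rlt 1 r ->
    B (finsums (fun z => exists n : nat,
                  sscale (pi ^+ star_exp eps r n) (setpow M n) z)).

End Born.

(* Main.v *)
Require Import Defs.
From Stdlib Require Import Reals.
From Stdlib Require Import Lra Lia ZArith.
Module RealAux.
Open Scope R_scope.

Lemma star_spec (eps r : R) (n : nat) : 0 < eps -> eps < 1 -> 1 < r ->
  INR n * (ln r / - ln eps) <= IZR (Defs.Zceil (log_base eps (/ r ^ n))) /\
  IZR (Defs.Zceil (log_base eps (/ r ^ n))) < INR n * (ln r / - ln eps) + 1.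
Proof.
intros he0 he1 hr.
assert (hl : ln eps < 0) by (rewrite <- ln_1; apply ln_increasing; lra).
assert (E : log_base eps (/ r ^ n) = INR n * (ln r / - ln eps)).
{ unfold log_base. rewrite ln_Rinv by (apply pow_lt; lra).
  rewrite ln_pow by lra. field. lra. }
rewrite E. unfold Defs.Zceil. rewrite minus_IZR.
destruct (archimed (- (INR n * (ln r / - ln eps)))) as [a b].
split; lra.
Qed.

Lemma star_R1 (eps r : R) : 0 < eps -> eps < 1 -> 1 < r ->
  exists c : nat, (0 < c)%nat /\ forall n q : nat, (q * c <= n)%nat -> (q <= star_exp eps r n)%nat.
Proof.
intros he0 he1 hr.
assert (hl : ln eps < 0) by (rewrite <- ln_1; apply ln_increasing; lra).
assert (hr' : 0 < ln r) by (rewrite <- ln_1; apply ln_increasing; lra).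
set (d := ln r / - ln eps).
assert (hd : 0 < d) by (unfold d; apply Rdiv_lt_0_compat; lra).
destruct (archimed (/ d)) as [a _].
assert (hid : 0 < / d) by (apply Rinv_0_lt_compat; lra).
assert (hu : (0 < up (/ d))%Z) by (apply lt_IZR; lra).
exists (Z.to_nat (up (/ d))). split; [lia|].
intros n q hqc. set (c := Z.to_nat (up (/ d))).
assert (hc : INR c = IZR (up (/ d))) by (unfold c; rewrite INR_IZR_INZ, Z2Nat.id by lia; reflexivity).
assert (hcd : 1 <= INR c * d).
{ rewrite hc. assert (/ d * d = 1) by (field; lra).
  apply Rlt_le. apply Rle_lt_trans with (/d * d); [lra|]. apply Rmult_lt_compat_r; lra. }
assert (hcn : (c * q <= n)%nat) by (unfold c in *; lia).
apply le_INR in hcn. rewrite mult_INR in hcn.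
destruct (star_spec eps r n he0 he1 hr) as [s1 _]. fold d in s1.
assert (hq : 0 <= INR q) by apply pos_INR.
assert (H : INR q <= IZR (Defs.Zceil (log_base eps (/ r ^ n)))).
{ apply Rle_trans with (INR c * d * INR q). nra.
  apply Rle_trans with (INR n * d); [|exact s1]. nra. }
rewrite INR_IZR_INZ in H. apply le_IZR in H. unfold star_exp. lia.
Qed.

Lemma star_R2 (eps : R) : 0 < eps -> eps < 1 ->
  exists r : R, 1 < r /\ forall j : nat, (star_exp eps r (S (S j)) <= S j)%nat.
Proof.
intros he0 he1.
assert (hl : ln eps < 0) by (rewrite <- ln_1; apply ln_increasing; lra).
exists (exp (- ln eps / 2)). split.
{ rewrite <- exp_0. apply exp_increasing. lra. }
intros j. destruct (star_spec eps (exp (- ln eps / 2)) (S (S j)) he0 he1) as [_ s2].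
{ rewrite <- exp_0. apply exp_increasing. lra. }
rewrite ln_exp in s2.
replace (- ln eps / 2 / - ln eps) with (/2) in s2 by (field; lra).
rewrite !S_INR in s2. assert (hj : 0 <= INR j) by apply pos_INR.
assert (H : IZR (Defs.Zceil (log_base eps (/ exp (- ln eps / 2) ^ S (S j)))) < IZR (Z.of_nat j + 2)).
{ rewrite plus_IZR, <- INR_IZR_INZ. lra. }
apply lt_IZR in H. unfold star_exp. lia.
Qed.
End RealAux.
From HB Require Import structures.
From mathcomp Require Import all_boot all_order all_algebra.
Set Implicit Arguments. Unset Strict Implicit. Unset Printing Implicit Defensive.
Import GRing.Theory.
Local Open Scope ring_scope.

Section Alg.
Variables (V : idomainType) (A : algType V).
Implicit Types (U W M Q S : A -> Prop).

Lemma finsums_add U x y : finsums U x -> finsums U y -> finsums U (x + y).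
Proof.
elim=> [|u s Hu Hs IH] Hy; first by rewrite add0r.
rewrite -addrA; constructor => //; exact: IH.
Qed.

Lemma sub_finsums U x : U x -> finsums U x.
Proof. by move=> Hx; rewrite -[x]addr0; constructor => //; constructor. Qed.

Lemma finsums_mono U W : incl_set U W -> incl_set (finsums U) (finsums W).
Proof. move=> HUW x; elim=> [|u s Hu _ IH]; constructor => //; exact: HUW. Qed.

Lemma finsums_sub U M : is_submod M -> incl_set U M -> incl_set (finsums U) M.
Proof. by case=> H0 HD _ HUM x; elim=> // u s Hu _ IH; apply: HD => //; apply: HUM. Qed.

Lemma finsums_scale U (a : V) z : (forall u, U u -> U (a *: u)) ->
  finsums U z -> finsums U (a *: z).
Proof.
move=> HU; elim=> [|u s Hu _ IH]; first by rewrite scaler0; constructor.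
by rewrite scalerDr; constructor => //; apply: HU.
Qed.

Lemma span_submod S : is_submod (Defs.span S).
Proof.
split; first by constructor.
  by move=> x y; apply: finsums_add.
move=> a x; apply: finsums_scale => u [b [y [Sy ->]]].
by exists (a * b), y; split => //; rewrite scalerA.
Qed.

Lemma span_incl S : incl_set S (Defs.span S).
Proof. by move=> x Sx; apply: sub_finsums; exists 1, x; rewrite scale1r. Qed.

Lemma finsums_span U : incl_set (finsums U) (Defs.span U).
Proof. apply: finsums_mono => x Ux; by exists 1, x; rewrite scale1r. Qed.

Lemma setpow_mul M m n x y : setpow M m x -> setpow M n y -> setpow M (m + n) (x * y).
Proof.
move=> Hx; elim: n y => [|n IH] y /=; first by move=> ->; rewrite addn0 mulr1.
case=> [y' [w [Hy' [Mw ->]]]]; rewrite addnS /=.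
by exists (x * y'), w; split; [apply: IH|split => //; rewrite mulrA].
Qed.

Lemma setpow_split M m n z : setpow M (m + n) z ->
  exists x y, [/\ setpow M m x, setpow M n y & z = x * y].
Proof.
elim: n z => [|n IH] z; first by rewrite addn0 => Hz; exists z, 1; rewrite mulr1.
rewrite addnS /= => -[z' [w [Hz' [Mw ->]]]].
have [x [y [Hx Hy ->]]] := IH _ Hz'.
by exists x, (y * w); split => //; [exists y, w | rewrite mulrA].
Qed.

Lemma setpow_scale M n (a : V) x : is_submod M -> setpow M n.+1 x -> setpow M n.+1 (a *: x).
Proof.
case=> _ _ HZ /= [u [w [Hu [Mw ->]]]].
by exists u, (a *: w); split => //; split; [apply: HZ | rewrite scalerAr].
Qed.

Lemma setpow_mono M Q n : incl_set M Q -> incl_set (setpow M n) (setpow Q n).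
Proof.
move=> HMQ; elim: n => [|n IH] x //= [u [w [Hu [Mw ->]]]].
by exists u, w; split; [apply: IH | split => //; apply: HMQ].
Qed.

Lemma setpow_pow M Q c j : incl_set (setpow M c) Q -> incl_set (setpow M (c * j)) (setpow Q j).
Proof.
move=> HQ; elim: j => [|j IH] x; first by rewrite muln0.
rewrite mulnS addnC => /setpow_split [u [w [Hu Hw ->]]].
by exists u, w; split; [apply: IH | split => //; apply: HQ].
Qed.

Lemma pow_in_Q (pi : V) Q j x : is_submod Q -> incl_set (sscale pi (setpow Q 2)) Q ->
  setpow Q j.+1 x -> Q (pi ^+ j *: x).
Proof.
move=> HQ HQ2; elim: j x => [|j IH] x.
  by move=> [u [w [-> [Qw ->]]]]; rewrite expr0 scale1r mul1r.
move=> [u [w [Hu [Qw ->]]]].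
apply: HQ2; exists ((pi ^+ j *: u) * w); split.
  exists (1 * (pi ^+ j *: u)), w; split => //; last by rewrite mul1r.
  by exists 1, (pi ^+ j *: u); split => //; split => //; apply: IH.
by rewrite -scalerAl scalerA -exprS.
Qed.

Lemma pow_in_Q2 (pi : V) Q M c d j z : is_submod Q -> incl_set (sscale pi (setpow Q 2)) Q ->
  incl_set (setpow M c) Q -> incl_set (setpow M d) Q ->
  setpow M (c * j + d) z -> Q (pi ^+ j *: z).
Proof.
move=> HQ HQ2 Hc Hd /setpow_split [x [y [Hx Hy ->]]].
apply: (pow_in_Q HQ HQ2); exists x, y; split; first exact: setpow_pow Hx.
by split => //; apply: Hd.
Qed.

Variable B : (A -> Prop) -> Prop.
Hypothesis HB : bornological_algebra B.

Lemma B_sub S T : B T -> incl_set S T -> B S.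
Proof. by case: HB => _ H _ _ _; apply: H. Qed.

Lemma B_union S T : B S -> B T -> B (fun x => S x \/ T x).
Proof. by case: HB => _ _ H _ _; apply: H. Qed.

Lemma B_span S : B S -> B (Defs.span S).
Proof. by case: HB => _ _ _ H _; apply: H. Qed.

Lemma B_finsums X Y : B Y -> incl_set X Y -> B (finsums X).
Proof.
move=> HY HXY; apply: (B_sub (B_span HY)) => x Hx.
by apply: finsums_span; apply: finsums_mono Hx.
Qed.

Lemma B_setpow M n : B M -> B (setpow M n).
Proof.
move=> HM; elim: n => [|n IH] /=.
  case: HB => H _ _ _ _; apply: (B_sub (H [:: 1])) => x ->; exact: mem_head.
by case: HB => _ _ _ _ H; apply: H.
Qed.

Lemma B_setpow_le M c : B M -> B (fun z => exists d, (d <= c)%N /\ setpow M d z).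
Proof.
move=> HM; elim: c => [|c IH].
  apply: (B_sub (B_setpow 0 HM)) => z [d [Hd Hz]].
  by move: Hd; rewrite leqn0 => /eqP Hd; rewrite Hd in Hz.
apply: (B_sub (B_union IH (B_setpow c.+1 HM))) => z [d [Hd Hz]].
move: Hd; rewrite leq_eqVlt => /orP [/eqP Hd|Hd].
  by right; rewrite -Hd.
by left; exists d.
Qed.

Lemma bilin (pi : V) U Q x y : is_submod Q ->
  (forall u v, U u -> U v -> Q (pi *: (u * v))) ->
  finsums U x -> finsums U y -> Q (pi *: (x * y)).
Proof.
move=> [H0 HD HZ] HUV; elim=> [|u s Hu _ IH] Hy.
  by rewrite mul0r scaler0.
rewrite mulrDl scalerDr; apply: (HD); last exact: IH.
elim: Hy => [|v t Hv _ IH2]; first by rewrite mulr0 scaler0.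
by rewrite mulrDr scalerDr; apply: HD => //; apply: HUV.
Qed.

End Alg.

Theorem mainTheorem12 (V : idomainType) (pi : V) (eps : Rdefinitions.R)
  (A : algType V) (B : (A -> Prop) -> Prop) :
  complete_DVR_unif pi -> Rlt 0 eps -> Rlt eps 1 ->
  bornological_algebra B ->
  [<-> (forall M : A -> Prop, B M -> is_submod M -> rho_le1 B pi eps M);
       (forall M : A -> Prop, B M -> forall c d : nat,
          B (finsums (fun z => exists j : nat,
                        sscale (pi ^+ j) (setpow M (c * j + d)) z)));
       (forall M : A -> Prop, B M ->
          B (finsums (fun z => exists j : nat,
                        sscale (pi ^+ j) (setpow M j.+1) z)));
       (forall S : A -> Prop, B S ->
          exists M : A -> Prop, [/\ B M, is_submod M, incl_set S M &
            incl_set (sscale pi (setpow M 2)) M])].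
Proof.
move=> _ he0 he1 HB.
have I42 : (forall S : A -> Prop, B S ->
          exists M : A -> Prop, [/\ B M, is_submod M, incl_set S M &
            incl_set (sscale pi (setpow M 2)) M]) ->
    (forall M : A -> Prop, B M -> forall c d : nat,
          B (finsums (fun z => exists j : nat,
                        sscale (pi ^+ j) (setpow M (c * j + d)) z))).
  move=> H4 M HM c d.
  have HS := B_union HB (B_setpow HB c HM) (B_setpow HB d HM).
  have [Q [BQ sQ SQ Q2]] := H4 _ HS.
  apply: (B_sub HB BQ); apply: (finsums_sub sQ) => z [j [x [Hx ->]]].
  by apply: (pow_in_Q2 sQ Q2 _ _ Hx) => y Hy; apply: (SQ); [left|right].
have I23 : (forall M : A -> Prop, B M -> forall c d : nat,
          B (finsums (fun z => exists j : nat,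
                        sscale (pi ^+ j) (setpow M (c * j + d)) z))) ->
   (forall M : A -> Prop, B M ->
          B (finsums (fun z => exists j : nat,
                        sscale (pi ^+ j) (setpow M j.+1) z))).
  move=> H2 M HM; apply: (B_sub HB (H2 M HM 1%N 1%N)); apply: finsums_mono.
  by move=> z [j Hz]; exists j; rewrite mul1n addn1.
have I34 : (forall M : A -> Prop, B M ->
          B (finsums (fun z => exists j : nat,
                        sscale (pi ^+ j) (setpow M j.+1) z))) ->
   (forall S : A -> Prop, B S ->
          exists M : A -> Prop, [/\ B M, is_submod M, incl_set S M &
            incl_set (sscale pi (setpow M 2)) M]).
  move=> H3 S HS.
  have BM0 := B_span HB HS; have sM0 := span_submod S.
  set M0 := Defs.span S in BM0 sM0.
  pose U := fun z => exists j : nat, sscale (pi ^+ j) (setpow M0 j.+1) z.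
  have sMq : is_submod (finsums U).
    split; first by constructor.
      by move=> x y; apply: finsums_add.
    move=> a x; apply: finsums_scale => u [j [y [Hy ->]]].
    exists j, (a *: y); split; first exact: setpow_scale.
    by rewrite !scalerA mulrC.
  exists (finsums U); split => //; first exact: H3.
    move=> s Ss; apply: sub_finsums; exists 0%N, s; split.
      by exists 1, s; split => //; split; [exact: span_incl | rewrite mul1r].
    by rewrite expr0 scale1r.
  move=> z [w [[x [y [[x' [y' [-> [Hy' ->]]]] [Hy ->]]]] ->]].
  rewrite mul1r; apply: (bilin sMq _ Hy' Hy).
  move=> u v [i [x1 [Hx1 ->]]] [j [y1 [Hy1 ->]]].
  rewrite -scalerAl -scalerAr !scalerA; apply: sub_finsums.
  exists (i + j).+1, (x1 * y1); split.
    by have := setpow_mul Hx1 Hy1; rewrite addSn addnS.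
  by rewrite exprS exprD mulrA.
have I41 : (forall S : A -> Prop, B S ->
          exists M : A -> Prop, [/\ B M, is_submod M, incl_set S M &
            incl_set (sscale pi (setpow M 2)) M]) ->
   (forall M : A -> Prop, B M -> is_submod M -> rho_le1 B pi eps M).
  move=> H4 M HM sM r Hr.
  have [c [c0 Hc]] := RealAux.star_R1 _ _ he0 he1 Hr.
  have [Q [BQ sQ SQ Q2]] := H4 _ (B_setpow_le HB c HM).
  apply: (B_sub HB BQ); apply: (finsums_sub sQ) => z [n [x [Hx ->]]].
  have c0' : (0 < c)%N by apply/ltP.
  have Hk : (n %/ c <= star_exp eps r n)%N.
    by apply/leP; apply: Hc; apply/leP; rewrite multE; apply: leq_trunc_div.
  have Hx' : setpow M (c * (n %/ c) + n %% c) x by rewrite mulnC -divn_eq.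
  have HQ : Q (pi ^+ (n %/ c) *: x).
    apply: (pow_in_Q2 sQ Q2 _ _ Hx') => y Hy; apply: (SQ).
      by exists c.
    by exists (n %% c)%N; split => //; apply: ltnW; rewrite ltn_pmod.
  rewrite -(subnK Hk) exprD -scalerA.
  by case: sQ => _ _ HZ; apply: HZ.
have I13 : (forall M : A -> Prop, B M -> is_submod M -> rho_le1 B pi eps M) ->
   (forall M : A -> Prop, B M ->
          B (finsums (fun z => exists j : nat,
                        sscale (pi ^+ j) (setpow M j.+1) z))).
  move=> H1 M HM.
  have [r [Hr Hk]] := RealAux.star_R2 _ he0 he1.
  have BT := H1 _ (B_span HB HM) (span_submod M) r Hr.
  apply: (B_finsums HB (B_union HB (B_setpow HB 1 HM) BT)) => z [j [x [Hx ->]]].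
  case: j Hx => [|j] Hx; first by left; rewrite expr0 scale1r.
  right; apply: sub_finsums; exists j.+2.
  have hk : (star_exp eps r j.+2 <= j.+1)%N by apply/leP; apply: Hk.
  exists (pi ^+ (j.+1 - star_exp eps r j.+2) *: x); split.
    apply: setpow_scale; first exact: span_submod.
    by apply: setpow_mono Hx; apply: span_incl.
  by rewrite scalerA -exprD addnC subnK.
tfae.
- by move=> H1; apply: I42; apply: I34; apply: I13.
- exact: I23.
- exact: I34.
- exact: I41.
Qed.
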